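(* For each of the sets $\{000,100,110\}$ and $\{000,001,010,011\}$, and for every set obtained from either of them by any sequence of coordinate negations and coordinate permutations, $\rho(\mathcal S)=2$.
   Context: Binary triples $(x_1,x_2,x_3)\in\{0,1\}^3$ are written $x_1x_2x_3$. Let $\mathcal S\subseteq\{0,1\}^3$ be nonempty. A distribution scheme with domain $\mathcal S$ is a pair $(P_R,\psi)$ where $P_R$ is a probability distribution on a finite set $\mathcal R$ and $\psi:\mathcal S\times\mathcal R\to\mathcal W_{12}\times\mathcal W_{23}\times\mathcal W_{31}$ for finite share alphabets. Given $\mathbf x=(x_1,x_2,x_3)\in\mathcal S$, the shares are $(W_{12},W_{23},W_{31})=\psi(\mathbf x,R)$, $R\sim P_R$. Party $P_1$ sees $V_1=(W_{12},W_{31})$, $P_2$ sees $V_2=(W_{23},W_{12})$, $P_3$ sees $V_3=(W_{31},W_{23})$. It is a 3SS scheme if (Correctness) for each $i$ there is a function $\phi_i$ with $\Pr[\phi_i(V_i)=x_i]=1$ for every $\mathbf x\in\mathcal S$, and (Perfect privacy) for each $i$ and all $\mathbf x,\mathbf x'\in\mathcal S$ with $x_i=x'_i$, $V_i$ has the same distribution under secret $\mathbf x$ as under $\mathbf x'$. The randomness complexity $\rho(\mathcal S)$ is the minimum of $\log_2|\mathcal R|$ over all 3SS schemes with domain $\mathcal S$. A coordinate negation maps $\mathcal S$ to $\{\mathbf x\oplus e_i:\mathbf x\in\mathcal S\}$; a coordinate permutation permutes the three coordinates of every element. *)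

(* Defs.v *)
From Stdlib Require Import Reals.
From mathcomp Require Import all_boot all_order all_algebra all_fingroup.
From mathcomp Require Import Rstruct.

Set Implicit Arguments.
Unset Strict Implicit.
Unset Printing Implicit Defensive.

Import GRing.Theory Num.Theory.

(* Binary triples x1x2x3; coordinate i is indexed by ord i-1 : 'I_3. *)
Definition trip := {ffun 'I_3 -> bool}.

Definition mktrip (a b c : bool) : trip :=
  [ffun i : 'I_3 => if val i == 0%N then a else if val i == 1%N then b else c].

Definition negate_coord (i : 'I_3) (x : trip) : trip :=
  [ffun j => if j == i then ~~ x j else x j].
Definition negate_set (i : 'I_3) (S : {set trip}) : {set trip} :=
  [set negate_coord i x | x in S].

Definition permute_coord (s : 'S_3) (x : trip) : trip := [ffun j => x (s j)].
Definition permute_set (s : 'S_3) (S : {set trip}) : {set trip} :=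
  [set permute_coord s x | x in S].

Inductive obtained_from (S0 : {set trip}) : {set trip} -> Prop :=
| obt_refl : obtained_from S0 S0
| obt_neg S i : obtained_from S0 S -> obtained_from S0 (negate_set i S)
| obt_perm S s : obtained_from S0 S -> obtained_from S0 (permute_set s S).

(* A distribution scheme: randomness set R with distribution P_R, share
   alphabets W12 W23 W31, and share map psi.  psi is given on all triples; only
   its values on the domain S matter. *)
Record scheme := Scheme {
  Rnd : finType;
  W12 : finType;
  W23 : finType;
  W31 : finType;
  PR : Rnd -> R;
  psi : trip -> Rnd -> (W12 * W23 * W31)
}.

Definition is_distribution (T : finType) (P : T -> R) : Prop :=
  (forall t, (0 <= P t)%R) /\ (\sum_(t : T) P t = 1)%R.

Definition c1 : 'I_3 := @Ordinal 3 0 isT.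
Definition c2 : 'I_3 := @Ordinal 3 1 isT.
Definition c3 : 'I_3 := @Ordinal 3 2 isT.

Section Views.
Variable sc : scheme.

Definition share12 x r := (@psi sc x r).1.1.
Definition share23 x r := (@psi sc x r).1.2.
Definition share31 x r := (@psi sc x r).2.

Definition view1 x r : W12 sc * W31 sc := (share12 x r, share31 x r).
Definition view2 x r : W23 sc * W12 sc := (share23 x r, share12 x r).
Definition view3 x r : W31 sc * W23 sc := (share31 x r, share23 x r).

Definition view_prob (V : finType) (view : trip -> Rnd sc -> V) x (v : V) : R :=
  (\sum_(r : Rnd sc | view x r == v) @PR sc r)%R.

Definition correct_for (S : {set trip}) (V : finType)
    (view : trip -> Rnd sc -> V) (i : 'I_3) : Prop :=
  exists phi : V -> bool, forall x, x \in S ->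
    (\sum_(r : Rnd sc | phi (view x r) == x i) @PR sc r)%R = 1%R.

Definition private_for (S : {set trip}) (V : finType)
    (view : trip -> Rnd sc -> V) (i : 'I_3) : Prop :=
  forall x x', x \in S -> x' \in S -> x i = x' i ->
    forall v : V, view_prob view x v = view_prob view x' v.

Definition is_3SS (S : {set trip}) : Prop :=
  is_distribution (@PR sc) /\
  correct_for S view1 c1 /\ correct_for S view2 c2 /\ correct_for S view3 c3 /\
  private_for S view1 c1 /\ private_for S view2 c2 /\ private_for S view3 c3.
End Views.

Definition log2 (x : R) : R := Rdiv (ln x) (ln 2).

Definition randomness_complexity_is (S : {set trip}) (rho : R) : Prop :=
  (exists sc : scheme, is_3SS sc S /\ log2 (INR #|Rnd sc|) = rho) /\
  (forall sc : scheme, is_3SS sc S -> Rle rho (log2 (INR #|Rnd sc|))).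

Definition S_A : {set trip} :=
  [set mktrip false false false; mktrip true false false; mktrip true true false].
Definition S_B : {set trip} :=
  [set mktrip false false false; mktrip false false true;
       mktrip false true false; mktrip false true true].

(* Main.v *)
Require Import Defs.
From Stdlib Require Import Reals.
From mathcomp Require Import all_boot all_order all_algebra all_fingroup.
From mathcomp Require Import Rstruct.
From Stdlib Require Import Lra.

Section LogLemmas.
Local Open Scope R_scope.
Lemma ln2_pos : 0 < ln 2.
Proof. pose proof ln_lt_2. assert (0 < / 2) by lra. lra. Qed.
Lemma ln4 : ln (INR 4) = 2 * ln 2.
Proof. replace (INR 4) with (2*2) by (simpl; ring). rewrite ln_mult; lra. Qed.
Lemma log2_4 : log2 (INR 4) = Rplus R1 R1.
Proof. unfold log2. rewrite ln4. pose proof ln2_pos. field. lra. Qed.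
Lemma log2_ge (n : nat) : (4 <= n)%nat -> Rle (Rplus R1 R1) (log2 (INR n)).
Proof.
  move=> /leP H. pose proof ln2_pos.
  assert (Hl : ln (INR 4) <= ln (INR n)).
  { apply le_INR in H. destruct (Rle_lt_or_eq_dec _ _ H) as [h|h].
    - left. apply ln_increasing; [simpl; lra | exact h].
    - rewrite h; lra. }
  rewrite ln4 in Hl. unfold log2.
  apply Rmult_le_reg_r with (ln 2); [lra|]. unfold Rdiv. rewrite Rmult_assoc Rinv_l; lra.
Qed.
End LogLemmas.
From mathcomp Require Import lra.

Set Implicit Arguments.
Unset Strict Implicit.
Section Helpers.
Import GRing.Theory Num.Theory Order.TTheory.
Local Open Scope ring_scope.

Lemma sum_pos_ex (T : finType) (P : T -> R) (p : pred T) :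
  (forall t, 0 <= P t) -> 0 < \sum_(t | p t) P t -> exists t, p t /\ 0 < P t.
Proof.
move=> P0 Hs; case: (pickP [pred t | p t && (0 < P t)]) => [t /andP[] | H].
  by exists t.
move: Hs; rewrite big1 ?ltxx // => t pt.
by have := H t; rewrite /= pt /= => /negbT; rewrite lt_def P0 andbT negbK => /eqP.
Qed.

Lemma ex_sum_pos (T : finType) (P : T -> R) (p : pred T) t :
  (forall t, 0 <= P t) -> p t -> 0 < P t -> 0 < \sum_(t | p t) P t.
Proof.
move=> P0 pt Pt; rewrite (bigD1 t) //=; apply: ltr_wpDr => //.
by apply: sumr_ge0 => i _; apply: P0.
Qed.

Lemma sum1_all (T : finType) (P : T -> R) (p : pred T) :
  (forall t, 0 <= P t) -> \sum_t P t = 1 -> \sum_(t | p t) P t = 1 ->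
  forall t, 0 < P t -> p t.
Proof.
move=> P0 S1 Sp t Pt; apply/negPn/negP => npt.
have := @ex_sum_pos T P (fun t => ~~ p t) t P0 npt Pt.
have : \sum_t P t = \sum_(t | p t) P t + \sum_(t | ~~ p t) P t by rewrite (bigID p).
rewrite S1 Sp; lra.
Qed.

Definition dist (T : finType) (P : T -> R) (U : eqType) (f g : T -> U) :=
  forall v, \sum_(r | f r == v) P r = \sum_(r | g r == v) P r.
Definition inj2 (Ta Tb U : Type) (g : Ta -> Tb -> U) :=
  forall a b a' b', g a b = g a' b' -> a = a' /\ b = b'.

Lemma fiber (T : finType) (P : T -> R) (X : Type) (x y : X)
  (Ta Tb Tc Ti Tj Tk : eqType)
  (A : X -> T -> Ta) (B : X -> T -> Tb) (C : X -> T -> Tc)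
  (Vi : X -> T -> Ti) (Vj : X -> T -> Tj) (Vk : X -> T -> Tk)
  (gi : Ta -> Tb -> Ti) (gj : Ta -> Tc -> Tj) (gk : Tb -> Tc -> Tk)
  (phi : Ti -> bool) (bx bY : bool) :
  (forall t, 0 <= P t) -> inj2 gj -> inj2 gk ->
  (forall w r, Vi w r = gi (A w r) (B w r)) ->
  (forall w r, Vj w r = gj (A w r) (C w r)) ->
  (forall w r, Vk w r = gk (B w r) (C w r)) ->
  dist P (Vj x) (Vj y) -> dist P (Vk x) (Vk y) ->
  (forall r, 0 < P r -> phi (Vi x r) = bx) ->
  (forall r, 0 < P r -> phi (Vi y r) = bY) -> bx != bY ->
  forall r0, 0 < P r0 -> exists r1, 0 < P r1 /\ C y r1 = C y r0 /\ A y r1 <> A y r0.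
Proof.
move=> P0 ij ik ei ej ek dj dk cx cy nxy r0 Pr0.
case: (pickP [pred r1 | (0 < P r1) && (C y r1 == C y r0) && (A y r1 != A y r0)]).
  by move=> r1 /andP[/andP[H1 /eqP H2] /eqP H3]; exists r1.
move=> Hn.
have H : forall r1, 0 < P r1 -> C y r1 = C y r0 -> A y r1 = A y r0.
  move=> r1 H1 H2; have := Hn r1; rewrite /= H1 H2 eqxx /=.
  by move/negbT; rewrite negbK => /eqP.
have := dk (Vk y r0); rewrite -/(dist _ _ _).
have Hp : 0 < \sum_(r | Vk y r == Vk y r0) P r by apply: (ex_sum_pos P0 _ Pr0).
move=> E; rewrite -E in Hp.
have [r3 [/eqP e3 P3]] := sum_pos_ex P0 Hp.
move: e3; rewrite !ek => /ik [eB3 eC3].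
have Hp2 : 0 < \sum_(r | Vj x r == Vj x r3) P r by apply: (ex_sum_pos P0 _ P3).
rewrite dj in Hp2.
have [r4 [/eqP e4 P4]] := sum_pos_ex P0 Hp2.
move: e4; rewrite !ej => /ij [eA4 eC4].
have eA := H r4 P4 (etrans eC4 eC3).
have := cx r3 P3; rewrite ei -eA4 eA eB3 -ei cy //.
by move=> E2; move: nxy; rewrite E2 eqxx.
Qed.

Lemma four (T : finType) (P : T -> R) (X : Type) (x y z : X)
  (Ta Tb Tc Ti Tj Tk : eqType)
  (A : X -> T -> Ta) (B : X -> T -> Tb) (C : X -> T -> Tc)
  (Vi : X -> T -> Ti) (Vj : X -> T -> Tj) (Vk : X -> T -> Tk)
  (gi : Ta -> Tb -> Ti) (gj : Ta -> Tc -> Tj) (gk : Tb -> Tc -> Tk)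
  (phii : Ti -> bool) (phij : Tj -> bool) (bx byi byj bz : bool) :
  (forall t, 0 <= P t) -> \sum_t P t = 1 ->
  inj2 gi -> inj2 gj -> inj2 gk ->
  (forall w r, Vi w r = gi (A w r) (B w r)) ->
  (forall w r, Vj w r = gj (A w r) (C w r)) ->
  (forall w r, Vk w r = gk (B w r) (C w r)) ->
  dist P (Vj x) (Vj y) -> dist P (Vk x) (Vk y) ->
  dist P (Vi y) (Vi z) -> dist P (Vk y) (Vk z) ->
  (forall r, 0 < P r -> phii (Vi x r) = bx) ->
  (forall r, 0 < P r -> phii (Vi y r) = byi) -> bx != byi ->
  (forall r, 0 < P r -> phij (Vj y r) = byj) ->
  (forall r, 0 < P r -> phij (Vj z r) = bz) -> byj != bz ->
  (4 <= #|T|)%N.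
Proof.
move=> P0 S1 ii ij ik ei ej ek djxy dkxy diyz dkyz cix ciy nxy cjy cjz nyz.
have [r0 [_ Pr0]] : exists t, true /\ 0 < P t.
  by apply: (@sum_pos_ex T P predT P0); rewrite S1 ltr01.
have F1 := fiber P0 ij ik ei ej ek djxy dkxy cix ciy nxy.
have ij' : inj2 (fun (c : Tc) (a : Ta) => gj a c).
  by move=> c a c' a' /ij [-> ->].
have ik' : inj2 (fun (c : Tc) (b : Tb) => gk b c).
  by move=> c b c' b' /ik [-> ->].
have [r1 [Pr1 [_ Cr1]]] := @fiber T P X z y Tc Ta Tb Tj Tk Ti C A B Vj Vk Vi
   (fun c a => gj a c) (fun c b => gk b c) gi phij bz byj P0 ik' ii
   (fun w r => ej w r) (fun w r => ek w r) (fun w r => ei w r)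
   (fun v => esym (dkyz v)) (fun v => esym (diyz v)) cjz cjy
   (ltac:(by rewrite eq_sym)) r0 Pr0.
have [r2 [Pr2 [Cr2 Ar2]]] := F1 r0 Pr0.
have [r3 [Pr3 [Cr3 Ar3]]] := F1 r1 Pr1.
rewrite cardT.
have -> : 4%N = size [:: r0; r2; r1; r3] by [].
apply: uniq_leq_size; last by move=> t _; rewrite mem_enum.
rewrite /= !inE !negb_or andbT.
have ne : forall a b : T, (a = b -> False) -> a != b by move=> a b H; apply/eqP.
rewrite !ne //; move=> E; subst; try congruence.
Qed.
End Helpers.

Notation d1 := Defs.c1.
Notation d2 := Defs.c2.
Notation d3 := Defs.c3.

Lemma ord3_cases (i : 'I_3) : i = d1 \/ i = d2 \/ i = d3.
Proof.
case: i => [[|[|[|//]]]] H; [left|right;left|right;right]; exact: val_inj.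
Qed.

Section Lower.
Import GRing.Theory Num.Theory Order.TTheory.
Local Open Scope ring_scope.

Lemma pair_inj (A B : Type) : inj2 (fun (a : A) (b : B) => (a, b)).
Proof. by move=> a b a' b' [-> ->]. Qed.
Lemma pair_inj' (A B : Type) : inj2 (fun (a : A) (b : B) => (b, a)).
Proof. by move=> a b a' b' [-> ->]. Qed.

Lemma neqN (b : bool) : b != ~~ b. Proof. by case: b. Qed.

Ltac fin p1 p2 p3 C1 C2 C3 n12 n13 n21 n23 n31 n32 := first [ assumption | exact: pair_inj | exact: pair_inj' | done
  | (move=> v; first [apply: p1 | apply: p2 | apply: p3]; rewrite // !ffunE ?eqxx ?n12 ?n13 ?n21 ?n23 ?n31 ?n32 //)
  | (move=> r hr; first [apply: C1 | apply: C2 | apply: C3]; done)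
  | (rewrite !ffunE ?eqxx ?n12 ?n13 ?n21 ?n23 ?n31 ?n32 /=; exact: neqN) ].

Lemma lower (sc : scheme) S x y z (i j : 'I_3) : is_3SS sc S ->
  x \in S -> y \in S -> z \in S -> i != j ->
  y = negate_coord i x -> z = negate_coord j y -> (4 <= #|Rnd sc|)%N.
Proof.
move=> [[P0 S1] [[phi1 c1h] [[phi2 c2h] [[phi3 c3h] [p1 [p2 p3]]]]]].
have C1 w (hw : w \in S) r (hr : 0 < @PR sc r) : phi1 (@view1 sc w r) = w d1.
  exact: (eqP (sum1_all P0 S1 (c1h w hw) hr)).
have C2 w (hw : w \in S) r (hr : 0 < @PR sc r) : phi2 (@view2 sc w r) = w d2.
  exact: (eqP (sum1_all P0 S1 (c2h w hw) hr)).
have C3 w (hw : w \in S) r (hr : 0 < @PR sc r) : phi3 (@view3 sc w r) = w d3.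
  exact: (eqP (sum1_all P0 S1 (c3h w hw) hr)).
move=> xS yS zS nij ey ez; subst y z.
have [Hi|[Hi|Hi]] := ord3_cases i; have [Hj|[Hj|Hj]] := ord3_cases j;
  subst i j; rewrite ?eqxx // in nij;
  have n12 : (d1 == d2) = false := erefl; have n13 : (d1 == d3) = false := erefl;
  have n21 : (d2 == d1) = false := erefl; have n23 : (d2 == d3) = false := erefl;
  have n31 : (d3 == d1) = false := erefl; have n32 : (d3 == d2) = false := erefl.
  + apply: (@four (Rnd sc) (@PR sc) trip x (negate_coord d1 x) (negate_coord d2 (negate_coord d1 x)) _ _ _ _ _ _
      (@share12 sc) (@share31 sc) (@share23 sc) (@view1 sc) (@view2 sc) (@view3 sc)
      (fun a b => (a, b)) (fun a c => (c, a)) (fun b c => (b, c)) phi1 phi2 (x d1) ((negate_coord d1 x) d1) ((negate_coord d1 x) d2) ((negate_coord d2 (negate_coord d1 x)) d2)); fin p1 p2 p3 C1 C2 C3 n12 n13 n21 n23 n31 n32.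
  + apply: (@four (Rnd sc) (@PR sc) trip x (negate_coord d1 x) (negate_coord d3 (negate_coord d1 x)) _ _ _ _ _ _
      (@share31 sc) (@share12 sc) (@share23 sc) (@view1 sc) (@view3 sc) (@view2 sc)
      (fun a b => (b, a)) (fun a c => (a, c)) (fun b c => (c, b)) phi1 phi3 (x d1) ((negate_coord d1 x) d1) ((negate_coord d1 x) d3) ((negate_coord d3 (negate_coord d1 x)) d3)); fin p1 p2 p3 C1 C2 C3 n12 n13 n21 n23 n31 n32.
  + apply: (@four (Rnd sc) (@PR sc) trip x (negate_coord d2 x) (negate_coord d1 (negate_coord d2 x)) _ _ _ _ _ _
      (@share12 sc) (@share23 sc) (@share31 sc) (@view2 sc) (@view1 sc) (@view3 sc)
      (fun a b => (b, a)) (fun a c => (a, c)) (fun b c => (c, b)) phi2 phi1 (x d2) ((negate_coord d2 x) d2) ((negate_coord d2 x) d1) ((negate_coord d1 (negate_coord d2 x)) d1)); fin p1 p2 p3 C1 C2 C3 n12 n13 n21 n23 n31 n32.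
  + apply: (@four (Rnd sc) (@PR sc) trip x (negate_coord d2 x) (negate_coord d3 (negate_coord d2 x)) _ _ _ _ _ _
      (@share23 sc) (@share12 sc) (@share31 sc) (@view2 sc) (@view3 sc) (@view1 sc)
      (fun a b => (a, b)) (fun a c => (c, a)) (fun b c => (b, c)) phi2 phi3 (x d2) ((negate_coord d2 x) d2) ((negate_coord d2 x) d3) ((negate_coord d3 (negate_coord d2 x)) d3)); fin p1 p2 p3 C1 C2 C3 n12 n13 n21 n23 n31 n32.
  + apply: (@four (Rnd sc) (@PR sc) trip x (negate_coord d3 x) (negate_coord d1 (negate_coord d3 x)) _ _ _ _ _ _
      (@share31 sc) (@share23 sc) (@share12 sc) (@view3 sc) (@view1 sc) (@view2 sc)
      (fun a b => (a, b)) (fun a c => (c, a)) (fun b c => (b, c)) phi3 phi1 (x d3) ((negate_coord d3 x) d3) ((negate_coord d3 x) d1) ((negate_coord d1 (negate_coord d3 x)) d1)); fin p1 p2 p3 C1 C2 C3 n12 n13 n21 n23 n31 n32.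
  + apply: (@four (Rnd sc) (@PR sc) trip x (negate_coord d3 x) (negate_coord d2 (negate_coord d3 x)) _ _ _ _ _ _
      (@share23 sc) (@share31 sc) (@share12 sc) (@view3 sc) (@view2 sc) (@view1 sc)
      (fun a b => (b, a)) (fun a c => (a, c)) (fun b c => (c, b)) phi3 phi2 (x d3) ((negate_coord d3 x) d3) ((negate_coord d3 x) d2) ((negate_coord d2 (negate_coord d3 x)) d2)); fin p1 p2 p3 C1 C2 C3 n12 n13 n21 n23 n31 n32.
Qed.
End Lower.

Section Upper.
Import GRing.Theory Num.Theory Order.TTheory.
Local Open Scope ring_scope.

Definition u4 : R := ((4%N)%:R)^-1.

Lemma unif_sum : \sum_(r : bool * bool) u4 = 1.
Proof.
rewrite sumr_const card_prod card_bool /= /u4 (_ : (2 * 2)%N = 4%N) //.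
by rewrite -(mulr_natr ((4%N)%:R)^-1 4) mulVf // pnatr_eq0.
Qed.

Lemma unif_dist : is_distribution (fun _ : bool * bool => u4).
Proof. split; last exact: unif_sum. by move=> _; rewrite /u4 invr_ge0 ler0n. Qed.

Lemma corr_all (T : finType) (P : T -> R) (p : pred T) :
  (forall r, p r) -> \sum_(r | p r) P r = \sum_r P r.
Proof. by move=> H; apply: eq_bigl => r; rewrite H. Qed.

Lemma priv_by (T : finType) (P : T -> R) (U : eqType) (f g : T -> U) (h : T -> T) :
  injective h -> (forall r, P (h r) = P r) -> (forall r, g (h r) = f r) ->
  forall v, \sum_(r | f r == v) P r = \sum_(r | g r == v) P r.
Proof.
move=> hi hP hg v; rewrite [RHS](reindex_inj hi) /=.
by apply: eq_big => r; rewrite ?hg ?hP.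
Qed.

Definition flip (a c : bool) (r : bool * bool) : bool * bool := (addb r.1 a, addb r.2 c).
Lemma flip_inj a c : injective (flip a c).
Proof. by apply: (can_inj (g := flip a c)) => -[r1 r2]; rewrite /flip /= !addbK. Qed.

Definition sch3 : scheme := @Scheme (bool * bool)%type (bool * bool)%type bool bool (fun _ => u4)
  (fun x r => ((r, addb r.1 (x d2)), addb r.2 (x d1))).
Definition sch1 : scheme := @Scheme (bool * bool)%type bool (bool * bool)%type bool (fun _ => u4)
  (fun x r => ((addb r.2 (x d2), r), addb r.1 (x d3))).
Definition sch2 : scheme := @Scheme (bool * bool)%type bool bool (bool * bool)%type (fun _ => u4)
  (fun x r => ((addb r.1 (x d1), addb r.2 (x d3)), r)).

Ltac brute x := move=> [[] []]; rewrite /view1 /view2 /view3 /share12 /share23 /share31 /=;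
  case: (x d1); case: (x d2); case: (x d3).

Lemma sch3_ok (S : {set trip}) (b : bool) : (forall w, w \in S -> w d3 = b) -> is_3SS sch3 S.
Proof.
move=> Hb; split; first exact: unif_dist.
split. exists (fun v : ((bool * bool) * bool)%type => addb v.1.2 v.2) => x _.
  rewrite corr_all; [exact: unif_sum | by brute x].
split. exists (fun v : (bool * (bool * bool))%type => addb v.1 v.2.1) => x _.
  rewrite corr_all; [exact: unif_sum | by brute x].
split. exists (fun _ => b) => x xS.
  rewrite corr_all; [exact: unif_sum | by move=> r; rewrite /= Hb].
split. move=> x x' _ _ e; apply: (priv_by (h := id)) => // r.
  by rewrite /view1 /share12 /share31 /= e.
split. move=> x x' _ _ e; apply: (priv_by (h := id)) => // r.
  by rewrite /view2 /share12 /share23 /= e.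
move=> x x' _ _ _; apply: (priv_by (h := flip (addb (x d2) (x' d2)) (addb (x d1) (x' d1)))) => //.
  exact: flip_inj.
move=> r; rewrite /view3 /share31 /share23 /flip /=.
by case: r => r1 r2 /=; case: (x d1); case: (x d2); case: (x' d1); case: (x' d2); case: r1; case: r2.
Qed.

Lemma sch1_ok (S : {set trip}) (b : bool) : (forall w, w \in S -> w d1 = b) -> is_3SS sch1 S.
Proof.
move=> Hb; split; first exact: unif_dist.
split. exists (fun _ => b) => x xS.
  rewrite corr_all; [exact: unif_sum | by move=> r; rewrite /= Hb].
split. exists (fun v : ((bool * bool) * bool)%type => addb v.1.2 v.2) => x _.
  rewrite corr_all; [exact: unif_sum | by brute x].
split. exists (fun v : (bool * (bool * bool))%type => addb v.1 v.2.1) => x _.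
  rewrite corr_all; [exact: unif_sum | by brute x].
split. move=> x x' _ _ _; apply: (priv_by (h := flip (addb (x d3) (x' d3)) (addb (x d2) (x' d2)))) => //.
  exact: flip_inj.
  move=> r; rewrite /view1 /share12 /share31 /flip /=.
  by case: r => r1 r2 /=; case: (x d3); case: (x d2); case: (x' d3); case: (x' d2); case: r1; case: r2.
split. move=> x x' _ _ e; apply: (priv_by (h := id)) => // r.
  by rewrite /view2 /share12 /share23 /= e.
move=> x x' _ _ e; apply: (priv_by (h := id)) => // r.
by rewrite /view3 /share31 /share23 /= e.
Qed.

Lemma sch2_ok (S : {set trip}) (b : bool) : (forall w, w \in S -> w d2 = b) -> is_3SS sch2 S.
Proof.
move=> Hb; split; first exact: unif_dist.
split. exists (fun v : (bool * (bool * bool))%type => addb v.1 v.2.1) => x _.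
  rewrite corr_all; [exact: unif_sum | by brute x].
split. exists (fun _ => b) => x xS.
  rewrite corr_all; [exact: unif_sum | by move=> r; rewrite /= Hb].
split. exists (fun v : ((bool * bool) * bool)%type => addb v.1.2 v.2) => x _.
  rewrite corr_all; [exact: unif_sum | by brute x].
split. move=> x x' _ _ e; apply: (priv_by (h := id)) => // r.
  by rewrite /view1 /share12 /share31 /= e.
split. move=> x x' _ _ _; apply: (priv_by (h := flip (addb (x d1) (x' d1)) (addb (x d3) (x' d3)))) => //.
  exact: flip_inj.
  move=> r; rewrite /view2 /share12 /share23 /flip /=.
  by case: r => r1 r2 /=; case: (x d3); case: (x d1); case: (x' d3); case: (x' d1); case: r1; case: r2.
move=> x x' _ _ e; apply: (priv_by (h := id)) => // r.
by rewrite /view3 /share31 /share23 /= e.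
Qed.
End Upper.

Definition good (S : {set trip}) :=
  (exists x y z (i j : 'I_3), [/\ x \in S, y \in S, z \in S, i != j &
      y = negate_coord i x /\ z = negate_coord j y]) /\
  (exists (k : 'I_3) (b : bool), forall w, w \in S -> w k = b).

Lemma neg_comm m i x : negate_coord m (negate_coord i x) = negate_coord i (negate_coord m x).
Proof.
apply/ffunP => t; rewrite !ffunE.
by case: (t == m); case: (t == i).
Qed.

Lemma perm_neg (s : 'S_3) i x :
  permute_coord s (negate_coord i x) = negate_coord (s^-1 i)%g (permute_coord s x).
Proof.
apply/ffunP => t; rewrite !ffunE.
by rewrite (can2_eq (permK s) (permKV s)).
Qed.

Lemma good_neg m S : good S -> good (negate_set m S).
Proof.
move=> [[x [y [z [i [j [xS yS zS nij [ey ez]]]]]]] [k [b Hb]]]; split.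
  exists (negate_coord m x), (negate_coord m y), (negate_coord m z), i, j.
  split; rewrite ?imset_f //; split; [by rewrite ey neg_comm | by rewrite ez neg_comm].
exists k, (if k == m then ~~ b else b) => w /imsetP [w' w'S ->].
by rewrite ffunE Hb.
Qed.

Lemma good_perm s S : good S -> good (permute_set s S).
Proof.
move=> [[x [y [z [i [j [xS yS zS nij [ey ez]]]]]]] [k [b Hb]]]; split.
  exists (permute_coord s x), (permute_coord s y), (permute_coord s z),
    (s^-1 i)%g, (s^-1 j)%g.
  split; rewrite ?imset_f ?(inj_eq (@perm_inj _ (s^-1)%g)) //; split;
    [by rewrite ey perm_neg | by rewrite ez perm_neg].
exists (s^-1 k)%g, b => w /imsetP [w' w'S ->].
by rewrite ffunE permKV Hb.
Qed.

Lemma good_obt S0 S : good S0 -> obtained_from S0 S -> good S.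
Proof.
move=> g0; elim=> [//|S1 i _ IH|S1 s _ IH]; [exact: good_neg | exact: good_perm].
Qed.

Lemma good_A : good S_A.
Proof.
split.
  exists (mktrip false false false), (mktrip true false false), (mktrip true true false), d1, d2.
  split; rewrite ?inE ?eqxx ?orbT //; split; apply/ffunP => t; rewrite !ffunE;
    by case: t => [[|[|[|]]]].
exists d3, false => w; rewrite !inE => /orP [/orP [] | ] /eqP -> ; by rewrite ffunE.
Qed.

Lemma good_B : good S_B.
Proof.
split.
  exists (mktrip false false true), (mktrip false false false), (mktrip false true false), d3, d2.
  split; rewrite ?inE ?eqxx ?orbT //; split; apply/ffunP => t; rewrite !ffunE;
    by case: t => [[|[|[|]]]].
exists d1, false => w; rewrite !inE => /orP [/orP [/orP [] | ] | ] /eqP -> ; by rewrite ffunE.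
Qed.

Unset Implicit Arguments.
Theorem mainTheorem8 (S : {set trip}) :
  obtained_from S_A S \/ obtained_from S_B S ->
  randomness_complexity_is S (Rplus R1 R1).
Proof.
move=> H.
have [[x [y [z [i [j [xS yS zS nij [ey ez]]]]]]] [k [b Hb]]] : good S.
  by case: H; [apply: good_obt good_A | apply: good_obt good_B].
split.
  have c4 : #|{: bool * bool}| = 4%N by rewrite card_prod card_bool.
  have [Hk|[Hk|Hk]] := ord3_cases k; subst k.
  - by exists sch1; split; [exact: sch1_ok Hb | rewrite /= c4; exact: log2_4].
  - by exists sch2; split; [exact: sch2_ok Hb | rewrite /= c4; exact: log2_4].
  - by exists sch3; split; [exact: sch3_ok Hb | rewrite /= c4; exact: log2_4].
move=> sc Hsc; apply: log2_ge; exact: lower Hsc xS yS zS nij ey ez.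
Qed.
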